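(* Let $P\in S^n$. Then, with respect to the Pompeiu-Hausdorff metric $h$: (1) the map $\bigcirc_{{\rm Wulff},P}:\mathcal{H}_{\rm Wulff}(S^n,P)\to\mathcal{H}_{\rm Wulff}(S^n,P)$, $W\mapsto W^\circ$, is a well-defined bijective isometry, i.e. $h(W_1^\circ,W_2^\circ)=h(W_1,W_2)$ for all $W_1,W_2\in\mathcal{H}_{\rm Wulff}(S^n,P)$; (2) the map $\overline{\bigcirc_{{\rm Wulff},P}}:\overline{\mathcal{H}_{\rm Wulff}(S^n,P)}\to\overline{\mathcal{H}_{\rm Wulff}(S^n,P)}$, $W\mapsto W^\circ$, is a well-defined bijective isometry, i.e. $h(W_1^\circ,W_2^\circ)=h(W_1,W_2)$ for all $W_1,W_2\in\overline{\mathcal{H}_{\rm Wulff}(S^n,P)}$.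
   Context: $n$ is a positive integer and $S^n$ is the unit sphere in $\mathbb{R}^{n+1}$. For $P,Q\in S^n$, $|PQ|=\arccos(P\cdot Q)$ is the spherical (geodesic) distance; $S^n$ is regarded as a metric space with this distance. For $P\in S^n$, $H(P)=\{Q\in S^n: P\cdot Q\ge 0\}$. For a non-empty $W\subset S^n$, its spherical polar set is $W^\circ=\bigcap_{P\in W}H(P)$. $\mathcal{H}(S^n)$ is the set of non-empty closed subsets of $S^n$ with the Pompeiu-Hausdorff metric $h(A,B)=\max\{\max_{x\in A}\min_{y\in B}|xy|,\ \max_{y\in B}\min_{x\in A}|xy|\}$. A subset $W\subset S^n$ is hemispherical if there is $P\in S^n$ with $W\cap H(P)=\emptyset$. For $P,Q$ in a hemispherical set $W$, the arc $PQ=\{((1-t)P+tQ)/\|(1-t)P+tQ\|: 0\le t\le 1\}$. A hemispherical $W$ is spherical convex if $PQ\subset W$ for all $P,Q\in W$; it is a spherical convex body if it is moreover closed and has an interior point. For $P\in S^n$, $\mathcal{H}_{\rm Wulff}(S^n,P)$ is the set of $W\in\mathcal{H}(S^n)$ such that $W\cap H(-P)=\emptyset$, $P$ is an interior point of $W$, and $W$ is a spherical convex body; $\overline{\mathcal{H}_{\rm Wulff}(S^n,P)}$ is its closure in $(\mathcal{H}(S^n),h)$. *)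

(* Defs.v *)
From Stdlib Require Import Reals Lra ClassicalEpsilon.
Open Scope R_scope.

(* Points of R^{n+1} are represented by functions nat -> R whose coordinates
   of index > n vanish; coordinates 0..n are the genuine ones. *)
Definition pt := nat -> R.
Definition pset := pt -> Prop.

Definition dot (n : nat) (x y : pt) : R := sum_f_R0 (fun i => x i * y i) n.
Definition vnorm (n : nat) (x : pt) : R := sqrt (dot n x x).
Definition vcomb (a : R) (x : pt) (b : R) (y : pt) : pt := fun i => a * x i + b * y i.
Definition vscale (a : R) (x : pt) : pt := fun i => a * x i.
Definition vopp (x : pt) : pt := fun i => - x i.

Definition sphere (n : nat) (x : pt) : Prop :=
  dot n x x = 1 /\ (forall i, (n < i)%nat -> x i = 0).

Definition sdist (n : nat) (P Q : pt) : R := acos (dot n P Q).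

Definition hemi (n : nat) (P : pt) : pset := fun Q => sphere n Q /\ 0 <= dot n P Q.

Definition polar (n : nat) (W : pset) : pset :=
  fun Q => sphere n Q /\ forall P, W P -> 0 <= dot n P Q.

Definition set_eq (A B : pset) : Prop := forall x, A x <-> B x.

Definition sclosed (n : nat) (W : pset) : Prop :=
  (forall x, W x -> sphere n x) /\
  forall x, sphere n x ->
    (forall eps, 0 < eps -> exists y, W y /\ sdist n x y < eps) -> W x.

Definition in_HS (n : nat) (W : pset) : Prop :=
  (exists x, W x) /\ sclosed n W.

(* Supremum of a set of reals (value 0 if not bounded-above or empty,
   irrelevant for the sets used below). *)
Definition Rsup (E : R -> Prop) : R :=
  match excluded_middle_informative (bound E /\ exists x, E x) with
  | left H => proj1_sig (completeness E (proj1 H) (proj2 H))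
  | right _ => 0
  end.

Definition Rinf (E : R -> Prop) : R := - Rsup (fun r => E (- r)).

Definition dist_pt_set (n : nat) (x : pt) (B : pset) : R :=
  Rinf (fun r => exists y, B y /\ r = sdist n x y).

Definition hexcess (n : nat) (A B : pset) : R :=
  Rsup (fun r => exists x, A x /\ r = dist_pt_set n x B).

Definition hdist (n : nat) (A B : pset) : R :=
  Rmax (hexcess n A B) (hexcess n B A).

Definition hemispherical (n : nat) (W : pset) : Prop :=
  exists P, sphere n P /\ forall Q, W Q -> ~ hemi n P Q.

Definition arc_pt (n : nat) (P Q : pt) (t : R) : pt :=
  let v := vcomb (1 - t) P t Q in vscale (/ vnorm n v) v.

Definition sconvex (n : nat) (W : pset) : Prop :=
  hemispherical n W /\
  forall P Q, W P -> W Q -> forall t, 0 <= t <= 1 -> W (arc_pt n P Q t).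

Definition interior_pt (n : nat) (W : pset) (P : pt) : Prop :=
  W P /\ exists eps, 0 < eps /\
    forall Q, sphere n Q -> sdist n P Q < eps -> W Q.

Definition sconvex_body (n : nat) (W : pset) : Prop :=
  sconvex n W /\ sclosed n W /\ exists Q, interior_pt n W Q.

Definition HWulff (n : nat) (P : pt) (W : pset) : Prop :=
  in_HS n W /\ (forall Q, W Q -> ~ hemi n (vopp P) Q) /\
  interior_pt n W P /\ sconvex_body n W.

Definition HWulff_cl (n : nat) (P : pt) (W : pset) : Prop :=
  in_HS n W /\
  forall eps, 0 < eps -> exists V, HWulff n P V /\ hdist n W V < eps.

(* Main.v *)
Require Import Defs.
From Stdlib Require Import Reals.
From Stdlib Require Import Lra Lia Psatz ClassicalEpsilon FunctionalExtensionality Classical PropExtensionality.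
Open Scope R_scope.


Definition vsub (x y : pt) : pt := fun i => x i - y i.
Definition ed (n : nat) (x y : pt) : R := dot n (vsub x y) (vsub x y).
Definition tz (n : nat) (x : pt) : Prop := forall i, (n < i)%nat -> x i = 0.
Definition vzero : pt := fun _ => 0.

Lemma sum_ext (f g : nat -> R) n : (forall i, (i <= n)%nat -> f i = g i) ->
  sum_f_R0 f n = sum_f_R0 g n.
Proof.
  induction n; intros H; simpl. apply H; lia.
  rewrite IHn by (intros; apply H; lia). rewrite H by lia. reflexivity.
Qed.

Lemma sum_plus (f g : nat -> R) n :
  sum_f_R0 (fun i => f i + g i) n = sum_f_R0 f n + sum_f_R0 g n.
Proof. induction n; simpl; [ring| rewrite IHn; ring]. Qed.

Lemma sum_scal (f : nat -> R) a n :
  sum_f_R0 (fun i => a * f i) n = a * sum_f_R0 f n.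
Proof. induction n; simpl; [ring| rewrite IHn; ring]. Qed.

Lemma sum_nonneg (f : nat -> R) n : (forall i, 0 <= f i) -> 0 <= sum_f_R0 f n.
Proof. intros H; induction n; simpl; [apply H| specialize (H (S n)); lra]. Qed.

Lemma sum_nonneg_zero (f : nat -> R) n : (forall i, 0 <= f i) -> sum_f_R0 f n = 0 ->
  forall i, (i <= n)%nat -> f i = 0.
Proof.
  intros H; induction n; simpl; intros Hs i Hi.
  - replace i with 0%nat by lia; exact Hs.
  - assert (0 <= sum_f_R0 f n) by (apply sum_nonneg; auto).
    pose proof (H (S n)).
    destruct (Nat.eq_dec i (S n)). subst; lra.
    apply IHn; [lra| lia].
Qed.

Lemma dot_comm n x y : dot n x y = dot n y x.
Proof. unfold dot; apply sum_ext; intros; ring. Qed.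

Lemma dot_vcomb_l n a x b y z : dot n (vcomb a x b y) z = a * dot n x z + b * dot n y z.
Proof.
  unfold dot, vcomb. rewrite <- !sum_scal, <- sum_plus. apply sum_ext; intros; ring.
Qed.

Lemma dot_vcomb_r n a x b y z : dot n z (vcomb a x b y) = a * dot n z x + b * dot n z y.
Proof. rewrite dot_comm, dot_vcomb_l, (dot_comm n x), (dot_comm n y); ring. Qed.

Lemma dot_vscale_l n a x z : dot n (vscale a x) z = a * dot n x z.
Proof. unfold dot, vscale. rewrite <- sum_scal. apply sum_ext; intros; ring. Qed.

Lemma dot_vscale_r n a x z : dot n z (vscale a x) = a * dot n z x.
Proof. rewrite dot_comm, dot_vscale_l, dot_comm; ring. Qed.

Lemma dot_vopp_l n x z : dot n (vopp x) z = - dot n x z.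
Proof.
  replace (vopp x) with (vscale (-1) x) by (apply functional_extensionality; intro; unfold vopp, vscale; ring).
  rewrite dot_vscale_l; ring.
Qed.

Lemma dot_vopp_r n x z : dot n z (vopp x) = - dot n z x.
Proof. rewrite dot_comm, dot_vopp_l, dot_comm; ring. Qed.

Lemma vsub_vcomb x y : vsub x y = vcomb 1 x (-1) y.
Proof. apply functional_extensionality; intro; unfold vsub, vcomb; ring. Qed.

Lemma dot_vsub_l n x y z : dot n (vsub x y) z = dot n x z - dot n y z.
Proof. rewrite vsub_vcomb, dot_vcomb_l; ring. Qed.

Lemma dot_vsub_r n x y z : dot n z (vsub x y) = dot n z x - dot n z y.
Proof. rewrite vsub_vcomb, dot_vcomb_r; ring. Qed.

Lemma dot_self_ge0 n x : 0 <= dot n x x.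
Proof. unfold dot; apply sum_nonneg; intros; apply Rle_0_sqr. Qed.

Lemma dot_zero_l n y : dot n vzero y = 0.
Proof. unfold dot, vzero. induction n; simpl. ring. rewrite IHn; ring. Qed.

Lemma dot_self_eq0 n x : dot n x x = 0 -> forall i, (i <= n)%nat -> x i = 0.
Proof.
  intros H i Hi. assert (x i * x i = 0).
  { apply (sum_nonneg_zero (fun i => x i * x i) n); auto. intros; apply Rle_0_sqr. }
  apply Rmult_integral in H0; tauto.
Qed.

Lemma dot_self_eq0_r n x y : dot n x x = 0 -> dot n x y = 0.
Proof.
  intros H. unfold dot. rewrite (sum_ext _ (fun _ => 0)).
  clear H. induction n; simpl. ring. rewrite IHn; ring. intros. rewrite (dot_self_eq0 n x H i H0); ring.
Qed.

Lemma eq_tz n x y : tz n x -> tz n y -> (forall i, (i <= n)%nat -> x i = y i) -> x = y.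
Proof.
  intros Hx Hy H; apply functional_extensionality; intro i.
  destruct (Compare_dec.le_lt_dec i n). auto. rewrite Hx, Hy; auto.
Qed.

Lemma dot_self_eq0_zero n x : tz n x -> dot n x x = 0 -> x = vzero.
Proof.
  intros Ht H. apply eq_tz with n; auto. intros i _; reflexivity.
  intros; rewrite (dot_self_eq0 n x H i H0); reflexivity.
Qed.

Lemma cauchy_schwarz n x y : Rsqr (dot n x y) <= dot n x x * dot n y y.
Proof.
  destruct (Req_dec (dot n y y) 0) as [Hy|Hy].
  - rewrite dot_comm, (dot_self_eq0_r n y x Hy), Hy. unfold Rsqr; lra.
  - pose proof (dot_self_ge0 n y).
    set (t := dot n x y / dot n y y).
    pose proof (dot_self_ge0 n (vcomb 1 x (-t) y)) as H1.
    rewrite dot_vcomb_l, !dot_vcomb_r in H1.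
    rewrite (dot_comm n y x) in H1.
    assert (Hyy: 0 < dot n y y) by lra.
    unfold t in H1.
    assert (0 <= dot n x x - Rsqr (dot n x y) / dot n y y).
    { replace (dot n x x - Rsqr (dot n x y) / dot n y y) with
        (1 * (1 * dot n x x + - (dot n x y / dot n y y) * dot n x y) +
        - (dot n x y / dot n y y) * (1 * dot n x y + - (dot n x y / dot n y y) * dot n y y)).
      exact H1. unfold Rsqr; field; lra. }
    assert (Rsqr (dot n x y) / dot n y y <= dot n x x) by lra.
    apply Rmult_le_reg_r with (/ dot n y y). apply Rinv_0_lt_compat; lra.
    replace (dot n x x * dot n y y * / dot n y y) with (dot n x x) by (field; lra). exact H2.
Qed.

Lemma abs_dot_le n x y : Rabs (dot n x y) <= vnorm n x * vnorm n y.
Proof.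
  unfold vnorm. rewrite <- sqrt_mult by apply dot_self_ge0.
  rewrite <- sqrt_Rsqr_abs. apply sqrt_le_1_alt. apply cauchy_schwarz.
Qed.

Lemma vnorm_sq n x : Rsqr (vnorm n x) = dot n x x.
Proof. unfold vnorm. rewrite Rsqr_sqrt; auto using dot_self_ge0. Qed.

Lemma vnorm_ge0 n x : 0 <= vnorm n x.
Proof. apply sqrt_pos. Qed.

Lemma Rabs_le_inv' a b : Rabs a <= b -> -b <= a <= b.
Proof. intros H. pose proof (Rle_abs a). pose proof (Rle_abs (-a)). rewrite Rabs_Ropp in H1. lra. Qed.

Lemma sphere_dot_bound n x y : sphere n x -> sphere n y -> -1 <= dot n x y <= 1.
Proof.
  intros [Hx _] [Hy _]. pose proof (abs_dot_le n x y). unfold vnorm in H.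
  rewrite Hx, Hy, sqrt_1 in H. apply Rabs_le_inv'; lra.
Qed.

Lemma ed_sphere n x y : sphere n x -> sphere n y -> ed n x y = 2 - 2 * dot n x y.
Proof.
  intros [Hx _] [Hy _]. unfold ed. rewrite !dot_vsub_l, !dot_vsub_r, (dot_comm n y x). lra.
Qed.

Lemma ed_ge0 n x y : 0 <= ed n x y.
Proof. apply dot_self_ge0. Qed.

Lemma vnorm_add n x y : vnorm n (vcomb 1 x 1 y) <= vnorm n x + vnorm n y.
Proof.
  pose proof (vnorm_ge0 n x). pose proof (vnorm_ge0 n y).
  apply Rsqr_incr_0_var; [|lra].
  rewrite vnorm_sq, dot_vcomb_l, !dot_vcomb_r.
  rewrite Rsqr_plus, !vnorm_sq. rewrite (dot_comm n y x).
  pose proof (abs_dot_le n x y). pose proof (Rle_abs (dot n x y)). lra.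
Qed.

Lemma vnorm_scale n a x : vnorm n (vscale a x) = Rabs a * vnorm n x.
Proof.
  unfold vnorm. rewrite dot_vscale_l, dot_vscale_r, <- Rmult_assoc.
  rewrite sqrt_mult; [| apply Rle_0_sqr| apply dot_self_ge0].
  change (a*a) with (Rsqr a). rewrite sqrt_Rsqr_abs. reflexivity.
Qed.

Lemma sqrt_ed_tri n x y z : sqrt (ed n x z) <= sqrt (ed n x y) + sqrt (ed n y z).
Proof.
  pose proof (vnorm_add n (vsub x y) (vsub y z)). unfold vnorm in H. unfold ed.
  replace (vcomb 1 (vsub x y) 1 (vsub y z)) with (vsub x z) in H. exact H.
  apply functional_extensionality; intro; unfold vcomb, vsub; ring.
Qed.

Lemma ed_comm n x y : ed n x y = ed n y x.
Proof. unfold ed. rewrite !dot_vsub_l, !dot_vsub_r, (dot_comm n x y). ring. Qed.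

Lemma dot_diff_bound n x y w : Rabs (dot n x w - dot n y w) <= sqrt (ed n x y) * vnorm n w.
Proof. rewrite <- dot_vsub_l. apply abs_dot_le. Qed.


Lemma acos_mono t c : -1 <= t <= 1 -> -1 <= c <= 1 -> c <= t -> acos t <= acos c.
Proof.
  intros Ht Hc H. destruct (Rle_lt_dec (acos t) (acos c)) as [|Hl]; auto.
  pose proof (acos_bound t). pose proof (acos_bound c).
  pose proof (cos_decreasing_1 (acos c) (acos t) ltac:(lra) ltac:(lra) ltac:(lra) ltac:(lra) Hl).
  rewrite !cos_acos in H2 by auto. lra.
Qed.

Lemma acos_strict t c : -1 <= t <= 1 -> -1 <= c <= 1 -> c < t -> acos t < acos c.
Proof.
  intros Ht Hc H. destruct (Rlt_le_dec (acos t) (acos c)) as [|Hl]; auto.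
  destruct (Req_dec (acos t) (acos c)) as [E|E].
  - assert (cos (acos t) = cos (acos c)) by (rewrite E; auto). rewrite !cos_acos in H0 by auto. lra.
  - pose proof (acos_bound t). pose proof (acos_bound c).
    pose proof (cos_decreasing_1 (acos c) (acos t) ltac:(lra) ltac:(lra) ltac:(lra) ltac:(lra) ltac:(lra)).
    rewrite !cos_acos in H2 by auto. lra.
Qed.

Lemma acos_lt_inv t c : -1 <= t <= 1 -> -1 <= c <= 1 -> acos t < acos c -> c < t.
Proof.
  intros Ht Hc H. destruct (Rlt_le_dec c t); auto.
  pose proof (acos_mono c t Hc Ht r). lra.
Qed.

Lemma acos_le_inv t c : -1 <= t <= 1 -> -1 <= c <= 1 -> acos t <= acos c -> c <= t.
Proof.
  intros Ht Hc H. destruct (Rle_lt_dec c t); auto.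
  pose proof (acos_strict c t Hc Ht r). lra.
Qed.

Lemma sdist_bound n x y : 0 <= sdist n x y <= PI.
Proof. apply acos_bound. Qed.

Lemma sdist_comm n x y : sdist n x y = sdist n y x.
Proof. unfold sdist; rewrite dot_comm; auto. Qed.

Lemma sdist_self n x : sphere n x -> sdist n x x = 0.
Proof. intros [H _]. unfold sdist; rewrite H; apply acos_1. Qed.

Lemma sdist_lt_acos n x y c : sphere n x -> sphere n y -> -1 <= c <= 1 ->
  c < dot n x y -> sdist n x y < acos c.
Proof. intros. apply acos_strict; auto. apply sphere_dot_bound; auto. Qed.

Lemma sdist_lt_acos_inv n x y c : sphere n x -> sphere n y -> -1 <= c <= 1 ->
  sdist n x y < acos c -> c < dot n x y.
Proof. intros. eapply acos_lt_inv; eauto. apply sphere_dot_bound; auto. Qed.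

Lemma sdist_le_half n x y : sphere n x -> sphere n y -> 0 <= dot n x y -> sdist n x y <= PI/2.
Proof.
  intros. rewrite <- acos_0. apply acos_mono; auto. apply sphere_dot_bound; auto. lra.
Qed.

Lemma sdist_le_half_inv n x y : sphere n x -> sphere n y -> sdist n x y <= PI/2 -> 0 <= dot n x y.
Proof.
  intros. rewrite <- acos_0 in H1. apply acos_le_inv in H1; auto. apply sphere_dot_bound; auto. lra.
Qed.

Lemma sdist_tri n x y z : sphere n x -> sphere n y -> sphere n z ->
  sdist n x z <= sdist n x y + sdist n y z.
Proof.
  intros Hx Hy Hz. unfold sdist.
  set (a := dot n x y). set (b := dot n y z). set (c := dot n x z).
  pose proof (sphere_dot_bound n x y Hx Hy) as Ha. pose proof (sphere_dot_bound n y z Hy Hz) as Hb.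
  pose proof (sphere_dot_bound n x z Hx Hz) as Hc. fold a b c in Ha, Hb, Hc.
  pose proof (acos_bound a). pose proof (acos_bound b). pose proof (acos_bound c).
  destruct (Rle_lt_dec PI (acos a + acos b)). lra.
  assert (Hcos : cos (acos a + acos b) <= c).
  { rewrite cos_plus, !cos_acos, !sin_acos by auto.
    set (u := vcomb 1 x (- a) y). set (v := vcomb 1 z (- b) y).
    pose proof (abs_dot_le n u v).
    destruct Hx as [Hx _]; destruct Hy as [Hy _]; destruct Hz as [Hz _].
    assert (Euv : dot n u v = c - a * b).
    { unfold u, v. rewrite dot_vcomb_l, !dot_vcomb_r. rewrite (dot_comm n y z). fold a b c. rewrite (dot_comm n z y). fold b. rewrite Hy. clear. clearbody a b c. ring. }
    assert (Eu : vnorm n u = sqrt (1 - a²)).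
    { unfold vnorm, u. f_equal. rewrite dot_vcomb_l, !dot_vcomb_r. rewrite (dot_comm n y x). fold a. rewrite Hx, Hy. unfold Rsqr. ring. }
    assert (Ev : vnorm n v = sqrt (1 - b²)).
    { unfold vnorm, v. f_equal. rewrite dot_vcomb_l, !dot_vcomb_r. rewrite (dot_comm n z y). fold b. rewrite Hz, Hy. unfold Rsqr. ring. }
    rewrite Euv, Eu, Ev in H2. apply Rabs_le_inv' in H2. lra. }
  assert (-1 <= cos (acos a + acos b) <= 1) by (split; [apply COS_bound| apply COS_bound]).
  rewrite <- (acos_cos (acos a + acos b)) by lra.
  apply acos_mono; auto.
Qed.

Lemma sphere_tz n x : sphere n x -> tz n x.
Proof. intros [_ H]; exact H. Qed.


Lemma set_eq_eq A B : set_eq A B -> A = B.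
Proof.
  intros H. apply functional_extensionality; intro x. apply propositional_extensionality. apply H.
Qed.

Lemma Rsup_lub E : bound E -> (exists x, E x) -> is_lub E (Rsup E).
Proof.
  intros Hb He. unfold Rsup. destruct excluded_middle_informative as [H|H].
  - destruct (completeness E (proj1 H) (proj2 H)); simpl; auto.
  - exfalso; tauto.
Qed.

Lemma Rsup_ub E x : bound E -> E x -> x <= Rsup E.
Proof. intros Hb Hx. destruct (Rsup_lub E Hb (ex_intro _ x Hx)) as [H _]. apply H; auto. Qed.

Lemma Rsup_least E m : (exists x, E x) -> (forall x, E x -> x <= m) -> Rsup E <= m.
Proof.
  intros He H. assert (Hb : bound E) by (exists m; intros x Hx; auto).
  destruct (Rsup_lub E Hb He) as [_ H2]. apply H2. intros x Hx; auto.
Qed.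

Lemma Rsup_approx E eps : bound E -> (exists x, E x) -> 0 < eps -> exists x, E x /\ Rsup E - eps < x.
Proof.
  intros Hb He Heps. destruct (classic (exists x, E x /\ Rsup E - eps < x)); auto.
  assert (Rsup E <= Rsup E - eps).
  { apply Rsup_least; auto. intros x Hx. destruct (Rle_lt_dec x (Rsup E - eps)); auto.
    exfalso; apply H; eauto. }
  lra.
Qed.

Lemma Rinf_lb E x m : (forall y, E y -> m <= y) -> E x -> Rinf E <= x.
Proof.
  intros Hm Hx. unfold Rinf. assert (- x <= Rsup (fun r => E (- r))).
  { apply Rsup_ub. exists (- m). intros y Hy. specialize (Hm _ Hy). lra.
    rewrite Ropp_involutive; auto. }
  lra.
Qed.

Lemma Rinf_greatest E m : (exists x, E x) -> (forall x, E x -> m <= x) -> m <= Rinf E.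
Proof.
  intros [x Hx] H. unfold Rinf. assert (Rsup (fun r => E (- r)) <= - m).
  { apply Rsup_least. exists (- x); rewrite Ropp_involutive; auto.
    intros y Hy. specialize (H _ Hy). lra. }
  lra.
Qed.

Lemma Rinf_approx E m eps : (forall y, E y -> m <= y) -> (exists x, E x) -> 0 < eps ->
  exists x, E x /\ x < Rinf E + eps.
Proof.
  intros Hm [x0 Hx0] Heps. unfold Rinf.
  destruct (Rsup_approx (fun r => E (- r)) eps) as [y [Hy1 Hy2]]; auto.
  exists (- m). intros y Hy. specialize (Hm _ Hy). lra.
  exists (- x0); rewrite Ropp_involutive; auto.
  exists (- y). split; auto. lra.
Qed.

Definition nonempty (A : pset) : Prop := exists x, A x.

Lemma dps_le n x B y : B y -> dist_pt_set n x B <= sdist n x y.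
Proof.
  intros Hy. unfold dist_pt_set. apply Rinf_lb with 0.
  intros r [z [_ ->]]. apply sdist_bound. eauto.
Qed.

Lemma dps_ge n x B m : nonempty B -> (forall y, B y -> m <= sdist n x y) -> m <= dist_pt_set n x B.
Proof.
  intros [y Hy] H. unfold dist_pt_set. apply Rinf_greatest. eauto.
  intros r [z [Hz ->]]; auto.
Qed.

Lemma dps_ge0 n x B : nonempty B -> 0 <= dist_pt_set n x B.
Proof. intros. apply dps_ge; auto. intros; apply sdist_bound. Qed.

Lemma dps_le_pi n x B : nonempty B -> dist_pt_set n x B <= PI.
Proof. intros [y Hy]. eapply Rle_trans. apply dps_le; eauto. apply sdist_bound. Qed.

Lemma dps_approx n x B eps : nonempty B -> 0 < eps ->
  exists y, B y /\ sdist n x y < dist_pt_set n x B + eps.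
Proof.
  intros [y0 Hy0] He. unfold dist_pt_set.
  destruct (Rinf_approx (fun r => exists y, B y /\ r = sdist n x y) 0 eps) as [r [[y [Hy ->]] Hr]]; eauto.
  intros r [z [_ ->]]. apply sdist_bound.
Qed.

Lemma hex_ge n A B x : nonempty B -> A x -> dist_pt_set n x B <= hexcess n A B.
Proof.
  intros HB Hx. unfold hexcess. apply Rsup_ub; eauto.
  exists PI. intros r [z [_ ->]]. apply dps_le_pi; auto.
Qed.

Lemma hex_le n A B m : nonempty A -> (forall x, A x -> dist_pt_set n x B <= m) -> hexcess n A B <= m.
Proof.
  intros [x Hx] H. unfold hexcess. apply Rsup_least. eauto.
  intros r [z [Hz ->]]; auto.
Qed.

Lemma hex_ge0 n A B : nonempty A -> nonempty B -> 0 <= hexcess n A B.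
Proof.
  intros [x Hx] HB. eapply Rle_trans. apply dps_ge0 with (x := x); eauto. apply hex_ge; auto.
Qed.


Definition nz (n : nat) (v : pt) : pt := vscale (/ vnorm n v) v.

Lemma tz_vscale n a x : tz n x -> tz n (vscale a x).
Proof. intros H i Hi; unfold vscale; rewrite H; auto; ring. Qed.
Lemma tz_vcomb n a x b y : tz n x -> tz n y -> tz n (vcomb a x b y).
Proof. intros H H' i Hi; unfold vcomb; rewrite H, H'; auto; ring. Qed.
Lemma tz_vsub n x y : tz n x -> tz n y -> tz n (vsub x y).
Proof. intros H H' i Hi; unfold vsub; rewrite H, H'; auto; ring. Qed.
Lemma tz_vopp n x : tz n x -> tz n (vopp x).
Proof. intros H i Hi; unfold vopp; rewrite H; auto; ring. Qed.
Lemma tz_vzero n : tz n vzero.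
Proof. intros i _; reflexivity. Qed.

Lemma vnorm_pos n v : dot n v v <> 0 -> 0 < vnorm n v.
Proof. intros H. unfold vnorm. apply sqrt_lt_R0. pose proof (dot_self_ge0 n v). lra. Qed.

Lemma nz_dot n v : dot n v v <> 0 -> dot n (nz n v) (nz n v) = 1.
Proof.
  intros H. unfold nz. rewrite dot_vscale_l, dot_vscale_r. rewrite <- vnorm_sq.
  pose proof (vnorm_pos n v H). unfold Rsqr. field. lra.
Qed.

Lemma nz_sphere n v : tz n v -> dot n v v <> 0 -> sphere n (nz n v).
Proof. intros. split. apply nz_dot; auto. apply tz_vscale; auto. Qed.

Lemma nz_scale n b v : 0 < b -> dot n v v <> 0 -> nz n (vscale b v) = nz n v.
Proof.
  intros Hb H. unfold nz. rewrite vnorm_scale. rewrite Rabs_pos_eq by lra.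
  pose proof (vnorm_pos n v H). apply functional_extensionality; intro i. unfold vscale. field. lra.
Qed.

Lemma nz_decomp n v : dot n v v <> 0 -> v = vscale (vnorm n v) (nz n v).
Proof.
  intros H. pose proof (vnorm_pos n v H). unfold nz. apply functional_extensionality; intro i.
  unfold vscale. field. lra.
Qed.

Lemma nz_sphere_id n k : sphere n k -> nz n k = k.
Proof.
  intros [H _]. unfold nz, vnorm. rewrite H, sqrt_1, Rinv_1. apply functional_extensionality; intro; unfold vscale; ring.
Qed.

Lemma arc_pt_nz n P Q t : arc_pt n P Q t = nz n (vcomb (1 - t) P t Q).
Proof. reflexivity. Qed.

Lemma dot_vscale_self n a v : dot n (vscale a v) (vscale a v) = a * a * dot n v v.
Proof. rewrite dot_vscale_l, dot_vscale_r; ring. Qed.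

Definition cconv (n : nat) (K : pset) : Prop :=
  forall k1 k2 a b, K k1 -> K k2 -> 0 <= a -> 0 <= b ->
    dot n (vcomb a k1 b k2) (vcomb a k1 b k2) <> 0 -> K (nz n (vcomb a k1 b k2)).

Definition cone (n : nat) (K : pset) (c : pt) : Prop :=
  tz n c /\ (dot n c c = 0 \/ K (nz n c)).

Lemma cone_zero n K : cone n K vzero.
Proof. split. apply tz_vzero. left; apply dot_zero_l. Qed.

Lemma cone_pt n K k : sphere n k -> K k -> cone n K k.
Proof. intros Hs Hk. split. exact (proj2 Hs). right. rewrite nz_sphere_id; auto. Qed.

Lemma cone_comb n K c1 c2 a b : cconv n K -> cone n K c1 -> cone n K c2 -> 0 <= a -> 0 <= b ->
  cone n K (vcomb a c1 b c2).
Proof.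
  intros HK [T1 H1] [T2 H2] Ha Hb. split. apply tz_vcomb; auto.
  destruct (Req_dec (dot n (vcomb a c1 b c2) (vcomb a c1 b c2)) 0) as [E|E]; [left; auto| right].
  destruct H1 as [Z1|K1].
  - apply dot_self_eq0_zero in Z1; auto. subst c1.
    assert (Ev : vcomb a vzero b c2 = vscale b c2) by (apply functional_extensionality; intro; unfold vcomb, vscale, vzero; ring).
    rewrite Ev in *. rewrite dot_vscale_self in E.
    assert (b <> 0) by (intro; subst; apply E; ring).
    assert (dot n c2 c2 <> 0) by (intro X; apply E; rewrite X; ring).
    rewrite nz_scale by lra. destruct H2; tauto.
  - destruct H2 as [Z2|K2].
    + apply dot_self_eq0_zero in Z2; auto. subst c2.
      assert (Ev : vcomb a c1 b vzero = vscale a c1) by (apply functional_extensionality; intro; unfold vcomb, vscale, vzero; ring).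
      rewrite Ev in *. rewrite dot_vscale_self in E.
      assert (a <> 0) by (intro; subst; apply E; ring).
      assert (dot n c1 c1 <> 0) by (intro X; apply E; rewrite X; ring).
      rewrite nz_scale by lra. auto.
    + destruct (Req_dec (dot n c1 c1) 0) as [Z1|N1].
      { apply dot_self_eq0_zero in Z1; auto. subst c1.
        assert (Ev : vcomb a vzero b c2 = vscale b c2) by (apply functional_extensionality; intro; unfold vcomb, vscale, vzero; ring).
        rewrite Ev in *. rewrite dot_vscale_self in E.
        assert (b <> 0) by (intro; subst; apply E; ring).
        assert (dot n c2 c2 <> 0) by (intro X; apply E; rewrite X; ring).
        rewrite nz_scale by lra. auto. }
      destruct (Req_dec (dot n c2 c2) 0) as [Z2|N2].
      { apply dot_self_eq0_zero in Z2; auto. subst c2.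
        assert (Ev : vcomb a c1 b vzero = vscale a c1) by (apply functional_extensionality; intro; unfold vcomb, vscale, vzero; ring).
        rewrite Ev in *. rewrite dot_vscale_self in E.
        assert (a <> 0) by (intro; subst; apply E; ring).
        rewrite nz_scale by lra. auto. }
      pose proof (vnorm_pos n c1 N1). pose proof (vnorm_pos n c2 N2).
      assert (Ev : vcomb a c1 b c2 = vcomb (a * vnorm n c1) (nz n c1) (b * vnorm n c2) (nz n c2)).
      { rewrite (nz_decomp n c1) at 1 by auto. rewrite (nz_decomp n c2) at 1 by auto.
        apply functional_extensionality; intro; unfold vcomb, vscale; ring. }
      rewrite Ev in *. apply HK; auto; apply Rmult_le_pos; lra.
Qed.

Lemma cv_const c : Un_cv (fun _ => c) c.
Proof. intros eps He. exists 0%nat. intros. unfold Rdist. rewrite Rminus_diag, Rabs_R0. lra. Qed.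

Lemma cv_dot n (u v : nat -> pt) U V :
  (forall i, (i <= n)%nat -> Un_cv (fun m => u m i) (U i)) ->
  (forall i, (i <= n)%nat -> Un_cv (fun m => v m i) (V i)) ->
  Un_cv (fun m => dot n (u m) (v m)) (dot n U V).
Proof.
  induction n; intros Hu Hv; unfold dot; simpl.
  - apply CV_mult; auto.
  - apply CV_plus. apply IHn; intros; [apply Hu| apply Hv]; lia.
    apply CV_mult; auto.
Qed.

Lemma cv_eventually_gt u L a : Un_cv u L -> a < L -> exists N, forall m, (m >= N)%nat -> a < u m.
Proof.
  intros H Ha. destruct (H (L - a)) as [N HN]. lra. exists N. intros m Hm.
  specialize (HN m Hm). unfold Rdist in HN. apply Rabs_def2 in HN. lra.
Qed.

Lemma cv_eventually_lt u L a : Un_cv u L -> L < a -> exists N, forall m, (m >= N)%nat -> u m < a.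
Proof.
  intros H Ha. destruct (H (a - L)) as [N HN]. lra. exists N. intros m Hm.
  specialize (HN m Hm). unfold Rdist in HN. apply Rabs_def2 in HN. lra.
Qed.

Lemma cv_le_inv u L a : Un_cv u L -> (forall m, u m <= a + / INR (S m)) -> L <= a.
Proof.
  intros H Hm. destruct (Rle_lt_dec L a) as [|Hl]; auto. exfalso.
  destruct (archimed_cor1 ((L - a)/2)) as [N1 [HN1 HN1']]. lra.
  destruct (cv_eventually_gt u L (a + (L - a)/2) H) as [N2 HN2]. lra.
  set (m := (N1 + N2)%nat). specialize (HN2 m ltac:(unfold m; lia)). specialize (Hm m).
  assert (/ INR (S m) <= / INR N1).
  { apply Rinv_le_contravar. apply lt_0_INR; lia. apply le_INR. unfold m; lia. }
  lra.
Qed.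


Ltac dexp := unfold ed; repeat (rewrite ?dot_vsub_l, ?dot_vsub_r, ?dot_vcomb_l, ?dot_vcomb_r, ?dot_vscale_l, ?dot_vscale_r).

Lemma parallelogram n x c1 c2 :
  ed n c1 c2 = 2 * ed n x c1 + 2 * ed n x c2 - 4 * ed n x (vcomb (/2) c1 (/2) c2).
Proof.
  dexp. rewrite (dot_comm n c1 x), (dot_comm n c2 x), (dot_comm n c2 c1). field.
Qed.

Lemma ed_step n x p c t :
  ed n x (vcomb (1 - t) p t c) = ed n x p - 2 * t * dot n (vsub x p) (vsub c p) + t * t * ed n c p.
Proof.
  dexp. rewrite (dot_comm n p x), (dot_comm n c x), (dot_comm n c p). ring.
Qed.

Lemma term_le_sum (f : nat -> R) n i : (forall j, 0 <= f j) -> (i <= n)%nat -> f i <= sum_f_R0 f n.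
Proof.
  intros H; induction n; intros Hi; simpl.
  - replace i with 0%nat by lia; lra.
  - destruct (Nat.eq_dec i (S n)). subst. pose proof (sum_nonneg f n H); lra.
    specialize (IHn ltac:(lia)). specialize (H (S n)); lra.
Qed.



Lemma coord_le_ed n c d i : (i <= n)%nat -> Rsqr (c i - d i) <= ed n c d.
Proof.
  intros Hi. unfold ed, dot, vsub.
  exact (term_le_sum (fun j => (c j - d j) * (c j - d j)) n i (fun j => Rle_0_sqr _) Hi).
Qed.

Lemma cos_thr eps : 0 < eps -> exists c, -1 <= c < 1 /\ acos c <= eps.
Proof.
  intros He. set (e := Rmin eps PI). assert (0 < e) by (unfold e; apply Rmin_glb_lt; auto; apply PI_RGT_0).
  assert (e <= PI) by apply Rmin_r. assert (e <= eps) by apply Rmin_l.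
  exists (cos e). split. split. apply COS_bound.
  rewrite <- cos_0. apply cos_decreasing_1; lra.
  rewrite acos_cos; lra.
Qed.


Lemma proj_exists n K x : (forall k, K k -> sphere n k) -> sclosed n K -> cconv n K -> tz n x ->
  exists p, cone n K p /\ (forall c, cone n K c -> dot n (vsub x p) c <= 0) /\ dot n (vsub x p) p = 0.
Proof.
  intros HKs HKc HKv Hx.
  set (E := fun r => exists c, cone n K c /\ r = ed n x c).
  set (delta := Rinf E).
  assert (HE0 : forall y, E y -> 0 <= y) by (intros y [c [_ ->]]; apply ed_ge0).
  assert (HEne : exists y, E y) by (exists (ed n x vzero); exists vzero; split; auto using cone_zero).
  assert (Hseq : forall m : nat, exists c, cone n K c /\ ed n x c < delta + / INR (S m)).
  { intros m. destruct (Rinf_approx E 0 (/ INR (S m)) HE0 HEne) as [r [[c [Hc ->]] Hr]].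
    apply Rinv_0_lt_compat, lt_0_INR; lia. eauto. }
  set (cs := fun m => proj1_sig (constructive_indefinite_description _ (Hseq m))).
  assert (Hcs : forall m, cone n K (cs m) /\ ed n x (cs m) < delta + / INR (S m)).
  { intros m. unfold cs. destruct constructive_indefinite_description; auto. }
  assert (Hdl : forall c, cone n K c -> delta <= ed n x c).
  { intros c Hc. apply Rinf_lb with 0; auto. exists c; auto. }
  assert (Hcauchy2 : forall m l, ed n (cs m) (cs l) <= 2 * / INR (S m) + 2 * / INR (S l)).
  { intros m l. rewrite (parallelogram n x).
    assert (H2 : 0 <= /2) by lra.
    pose proof (Hdl (vcomb (/2) (cs m) (/2) (cs l)) (cone_comb n K _ _ _ _ HKv (proj1 (Hcs m)) (proj1 (Hcs l)) H2 H2)).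
    pose proof (proj2 (Hcs m)). pose proof (proj2 (Hcs l)). lra. }
  assert (Hcauchy : forall i, Cauchy_crit (fun m => cs m i)).
  { intros i eps He.
    destruct (Compare_dec.le_lt_dec i n) as [Hi|Hi].
    - destruct (archimed_cor1 (Rsqr eps / 4)) as [N [HN HN']].
      { unfold Rsqr. apply Rmult_lt_0_compat. nra. lra. }
      exists N. intros m l Hm Hl. unfold Rdist.
      pose proof (coord_le_ed n (cs m) (cs l) i Hi). pose proof (Hcauchy2 m l).
      assert (/ INR (S m) <= / INR N) by (apply Rinv_le_contravar; [apply lt_0_INR; lia| apply le_INR; lia]).
      assert (/ INR (S l) <= / INR N) by (apply Rinv_le_contravar; [apply lt_0_INR; lia| apply le_INR; lia]).
      assert (Rsqr (cs m i - cs l i) < Rsqr eps) by lra.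
      rewrite <- (Rabs_pos_eq eps) by lra. apply Rsqr_lt_abs_0; auto.
    - exists 0%nat. intros m l _ _. unfold Rdist.
      rewrite (proj1 (proj1 (Hcs m)) i Hi), (proj1 (proj1 (Hcs l)) i Hi). rewrite Rminus_diag, Rabs_R0; lra. }
  set (p := fun i => proj1_sig (R_complete _ (Hcauchy i))).
  assert (Hp : forall i, Un_cv (fun m => cs m i) (p i)).
  { intros i. unfold p. destruct R_complete; auto. }
  assert (Hptz : tz n p).
  { intros i Hi. apply UL_sequence with (fun m => cs m i); auto.
    eapply Un_cv_ext; [| apply (cv_const 0)]. intros m; simpl. rewrite (proj1 (proj1 (Hcs m)) i Hi); auto. }
  assert (Hedcv : Un_cv (fun m => ed n x (cs m)) (ed n x p)).
  { unfold ed. apply cv_dot; intros i _; unfold vsub; apply CV_minus; auto using cv_const. }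
  assert (Hle : ed n x p <= delta).
  { apply (cv_le_inv _ _ _ Hedcv). intros m; pose proof (proj2 (Hcs m)); lra. }
  assert (Hpc : cone n K p).
  { split; auto. destruct (Req_dec (dot n p p) 0) as [Z|NZ]; [left; auto| right].
    apply (proj2 HKc). apply nz_sphere; auto.
    intros eps He. destruct (cos_thr eps He) as [c [Hc1 Hc2]].
    set (L := dot n p p). assert (HL : 0 < L) by (pose proof (dot_self_ge0 n p); unfold L; lra).
    assert (C1 : Un_cv (fun m => dot n p (cs m)) L) by (apply cv_dot; auto using cv_const).
    assert (C2 : Un_cv (fun m => dot n (cs m) (cs m)) L) by (apply cv_dot; auto).
    assert (C3 : Un_cv (fun m => c * vnorm n p * vnorm n (cs m)) (c * vnorm n p * vnorm n p)).
    { apply CV_mult. apply cv_const. unfold vnorm. apply continuity_seq; auto. apply continuity_pt_sqrt. apply dot_self_ge0. }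
    assert (Ec : c * vnorm n p * vnorm n p = c * L) by (rewrite Rmult_assoc; fold (Rsqr (vnorm n p)); rewrite vnorm_sq; auto).
    rewrite Ec in C3.
    destruct (cv_eventually_gt _ _ ((1 + c) * L / 2) C1) as [N1 HN1]. nra.
    destruct (cv_eventually_lt _ _ ((1 + c) * L / 2) C3) as [N2 HN2]. nra.
    destruct (cv_eventually_gt _ _ 0 C2) as [N3 HN3]. auto.
    set (m := (N1 + N2 + N3)%nat).
    specialize (HN1 m ltac:(unfold m; lia)). specialize (HN2 m ltac:(unfold m; lia)). specialize (HN3 m ltac:(unfold m; lia)).
    destruct (proj1 (Hcs m)) as [Tm [Zm|Km]]. lra.
    exists (nz n (cs m)). split; auto.
    apply Rlt_le_trans with (acos c); auto.
    apply sdist_lt_acos. apply nz_sphere; auto. apply nz_sphere; auto; lra. lra.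
    unfold nz. rewrite dot_vscale_l, dot_vscale_r.
    assert (0 < vnorm n p) by (apply vnorm_pos; auto). assert (0 < vnorm n (cs m)) by (apply vnorm_pos; lra).
    apply Rmult_lt_reg_r with (vnorm n p * vnorm n (cs m)). nra.
    replace (/ vnorm n p * (/ vnorm n (cs m) * dot n p (cs m)) * (vnorm n p * vnorm n (cs m))) with (dot n p (cs m)) by (field; lra).
    lra. }
  assert (Hmin : forall c, cone n K c -> ed n x p <= ed n x c).
  { intros c Hc. pose proof (Hdl c Hc). lra. }
  assert (Hvar : forall c, cone n K c -> dot n (vsub x p) (vsub c p) <= 0).
  { intros c Hc. set (A := dot n (vsub x p) (vsub c p)). set (B := ed n c p).
    assert (HB : 0 <= B) by apply ed_ge0.
    assert (Ht : forall t, 0 < t <= 1 -> 2 * A <= t * B).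
    { intros t Ht. pose proof (Hmin _ (cone_comb n K p c (1 - t) t HKv Hpc Hc ltac:(lra) ltac:(lra))).
      rewrite ed_step in H. fold A B in H. nra. }
    destruct (Rle_lt_dec A 0) as [|HA]; auto.
    set (t := Rmin 1 (A / (B + 1))).
    assert (0 < A / (B + 1)) by (apply Rdiv_lt_0_compat; lra).
    assert (Htt : 0 < t <= 1) by (unfold t; split; [apply Rmin_glb_lt; lra| apply Rmin_l]).
    specialize (Ht t Htt). assert (t <= A / (B + 1)) by apply Rmin_r.
    assert (t * B <= A / (B + 1) * B) by (apply Rmult_le_compat_r; auto).
    assert (A / (B + 1) * B < A).
    { unfold Rdiv. replace (A * / (B + 1) * B) with (A * (B / (B + 1))) by (field; lra).
      assert (B / (B + 1) < 1) by (apply Rmult_lt_reg_r with (B + 1); [lra|]; unfold Rdiv; rewrite Rmult_assoc, Rinv_l; lra).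
      nra. }
    lra. }
  assert (H2p : cone n K (vcomb 2 p 0 p)) by (apply cone_comb; auto; lra).
  pose proof (Hvar _ H2p) as V1. pose proof (Hvar _ (cone_zero n K)) as V2.
  assert (Ep1 : vsub (vcomb 2 p 0 p) p = p) by (apply functional_extensionality; intro; unfold vsub, vcomb; ring).
  assert (Ep2 : vsub vzero p = vopp p) by (apply functional_extensionality; intro; unfold vsub, vzero, vopp; ring).
  rewrite Ep1 in V1. rewrite Ep2, dot_vopp_r in V2.
  exists p. split; auto. split; [| lra].
  intros c Hc. pose proof (Hvar c Hc). rewrite dot_vsub_r in H. lra.
Qed.


Definition good (n : nat) (P : pt) (K : pset) : Prop :=
  (forall x, K x -> sphere n x) /\ sclosed n K /\ K P /\ (forall x, K x -> 0 <= dot n P x) /\ cconv n K.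

Lemma close_lemma n m : 0 < m -> exists eps, 0 < eps /\
  forall x y, sphere n x -> sphere n y -> sdist n x y < eps -> sqrt (ed n x y) < m.
Proof.
  intros Hm. set (r := Rmin (Rsqr m / 4) 1). set (c := 1 - r).
  assert (Hr : 0 < r) by (unfold r; apply Rmin_glb_lt; [unfold Rsqr; nra| lra]).
  assert (Hr1 : r <= 1) by apply Rmin_r. assert (Hr2 : r <= Rsqr m / 4) by apply Rmin_l.
  exists (acos c). split.
  - rewrite <- acos_1. apply acos_strict; unfold c; lra.
  - intros x y Hx Hy Hd. apply sdist_lt_acos_inv in Hd; auto; [| unfold c; lra].
    rewrite ed_sphere by auto. rewrite <- (sqrt_Rsqr m) by lra.
    apply sqrt_lt_1. pose proof (sphere_dot_bound n x y Hx Hy); lra. apply Rle_0_sqr.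
    unfold c in Hd. unfold Rsqr in *; nra.
Qed.

Lemma polar_sphere n W x : polar n W x -> sphere n x.
Proof. intros [H _]; auto. Qed.

Lemma polar_closed n W : (forall w, W w -> sphere n w) -> sclosed n (polar n W).
Proof.
  intros HW. split. apply polar_sphere.
  intros x Hx Happ. split; auto. intros w Hw.
  destruct (Rle_lt_dec 0 (dot n w x)) as [|Hneg]; auto. exfalso.
  destruct (close_lemma n (- dot n w x)) as [eps [He Hcl]]. lra.
  destruct (Happ eps He) as [y [[Hy1 Hy2] Hy3]].
  pose proof (Hcl x y Hx Hy1 Hy3). pose proof (Hy2 w Hw).
  pose proof (dot_diff_bound n x y w). unfold vnorm in H1. rewrite (proj1 (HW w Hw)), sqrt_1 in H1.
  rewrite (dot_comm n x w), (dot_comm n y w) in H1. apply Rabs_le_inv' in H1. lra.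
Qed.

Lemma polar_cconv n W : cconv n (polar n W).
Proof.
  intros k1 k2 a b [S1 H1] [S2 H2] Ha Hb Hv. split.
  apply nz_sphere; auto. apply tz_vcomb; [exact (proj2 S1)| exact (proj2 S2)].
  intros w Hw. unfold nz. rewrite dot_vscale_r, dot_vcomb_r.
  pose proof (vnorm_pos n _ Hv). pose proof (H1 w Hw). pose proof (H2 w Hw).
  apply Rmult_le_pos. left; apply Rinv_0_lt_compat; auto. nra.
Qed.

Lemma good_polar n P K : good n P K -> good n P (polar n K).
Proof.
  intros (HKs & HKc & HKP & HKh & HKv). split; [|split; [|split; [|split]]].
  - apply polar_sphere.
  - apply polar_closed; auto.
  - split. auto. intros w Hw. rewrite dot_comm. auto.
  - intros x [_ Hx]. auto.
  - apply polar_cconv.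
Qed.

Lemma double_polar n P K : good n P K -> forall x, polar n (polar n K) x -> K x.
Proof.
  intros (HKs & HKc & HKP & HKh & HKv) x Hx.
  pose proof (polar_sphere _ _ _ Hx) as Sx.
  destruct (proj_exists n K x HKs HKc HKv (proj2 Sx)) as [p [Hpc [Hpv Hpo]]].
  set (d := vsub x p).
  destruct (Req_dec (dot n d d) 0) as [Z|NZ].
  - apply dot_self_eq0_zero in Z; [| apply tz_vsub; [exact (proj2 Sx)| exact (proj1 Hpc)]].
    assert (x = p) by (apply functional_extensionality; intro i; assert (d i = 0) by (rewrite Z; auto); unfold d, vsub in H; lra).
    subst p. destruct Hpc as [_ [Z'|Kx]].
    + rewrite (proj1 Sx) in Z'. lra.
    + rewrite nz_sphere_id in Kx; auto.
  - exfalso. set (z := nz n (vopp d)).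
    assert (Dz : dot n (vopp d) (vopp d) <> 0) by (rewrite dot_vopp_l, dot_vopp_r; lra).
    pose proof (vnorm_pos n _ Dz) as Pz.
    assert (Hz : polar n K z).
    { split. apply nz_sphere; auto. apply tz_vopp, tz_vsub; [exact (proj2 Sx)| exact (proj1 Hpc)].
      intros k Hk. unfold z, nz. rewrite dot_vscale_r, dot_vopp_r.
      pose proof (Hpv k (cone_pt n K k (HKs k Hk) Hk)). rewrite dot_comm.
      apply Rmult_le_pos. left; apply Rinv_0_lt_compat; auto. fold d in H. lra. }
    destruct Hx as [_ Hx]. specialize (Hx z Hz).
    unfold z, nz in Hx. rewrite dot_vscale_l, dot_vopp_l in Hx.
    assert (Edx : dot n d x = dot n d d + dot n d p) by (unfold d at 3; rewrite dot_vsub_r; ring).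
    fold d in Hpo. rewrite Hpo in Edx. pose proof (dot_self_ge0 n d).
    assert (0 < / vnorm n (vopp d)) by (apply Rinv_0_lt_compat; auto). nra.
Qed.

Lemma polar_polar_eq n P K : good n P K -> polar n (polar n K) = K.
Proof.
  intros HK. apply set_eq_eq. intros x; split.
  - apply double_polar with P; auto.
  - intros Kx. destruct HK as (HKs & _). split; auto. intros z [_ Hz]. rewrite dot_comm; auto.
Qed.

Lemma F1 n K x z : nonempty K -> (forall k, K k -> sphere n k) -> sphere n x -> polar n K z ->
  sdist n x z - PI/2 <= dist_pt_set n x K.
Proof.
  intros HKn HKs Sx [Sz Hz]. apply dps_ge; auto. intros k Hk.
  pose proof (sdist_tri n x k z Sx (HKs k Hk) Sz). pose proof (sdist_le_half n k z (HKs k Hk) Sz (Hz k Hk)). lra.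
Qed.

Lemma F2 n P K x : sphere n P -> good n P K -> sphere n x -> 0 <= dot n P x ->
  dist_pt_set n x K = 0 \/ exists z, polar n K z /\ dist_pt_set n x K <= sdist n x z - PI/2.
Proof.
  intros SP HK Sx HPx. pose proof HK as (HKs & HKc & HKP & HKh & HKv).
  assert (HKn : nonempty K) by (exists P; auto).
  destruct (classic (K x)) as [Kx|NKx].
  { left. pose proof (dps_le n x K x Kx). rewrite sdist_self in H by auto. pose proof (dps_ge0 n x K HKn). lra. }
  right.
  destruct (proj_exists n K x HKs HKc HKv (proj2 Sx)) as [p [Hpc [Hpv Hpo]]].
  set (d := vsub x p). fold d in Hpo, Hpv.
  assert (NZ : dot n d d <> 0).
  { intro Z. apply dot_self_eq0_zero in Z; [| apply tz_vsub; [exact (proj2 Sx)| exact (proj1 Hpc)]].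
    assert (x = p) by (apply functional_extensionality; intro i; assert (d i = 0) by (rewrite Z; auto); unfold d, vsub in H; lra).
    subst p. destruct Hpc as [_ [Z'|Kx]].
    + rewrite (proj1 Sx) in Z'. lra.
    + rewrite nz_sphere_id in Kx; auto. }
  set (z := nz n (vopp d)).
  assert (Dz : dot n (vopp d) (vopp d) <> 0) by (rewrite dot_vopp_l, dot_vopp_r; lra).
  pose proof (vnorm_pos n _ Dz) as Pz.
  assert (Hz : polar n K z).
  { split. apply nz_sphere; auto. apply tz_vopp, tz_vsub; [exact (proj2 Sx)| exact (proj1 Hpc)].
    intros k Hk. unfold z, nz. rewrite dot_vscale_r, dot_vopp_r.
    pose proof (Hpv k (cone_pt n K k (HKs k Hk) Hk)). rewrite dot_comm.
    apply Rmult_le_pos. left; apply Rinv_0_lt_compat; auto. lra. }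
  exists z. split; auto.
  assert (Edx : dot n x d = dot n d d) by (rewrite (dot_comm n x d); unfold d at 3; rewrite dot_vsub_r, Hpo; ring).
  assert (Enorm : vnorm n (vopp d) = vnorm n d) by (unfold vnorm; rewrite dot_vopp_l, dot_vopp_r; f_equal; ring).
  assert (Exz : dot n x z = - vnorm n d).
  { unfold z, nz. rewrite dot_vscale_r, dot_vopp_r, Edx, Enorm, <- vnorm_sq.
    rewrite Enorm in Pz. unfold Rsqr. field. lra. }
  assert (Exp : dot n x p = dot n p p) by (unfold d in Hpo; rewrite dot_vsub_l in Hpo; lra).
  assert (Edd : dot n d d = 1 - dot n p p).
  { unfold d. rewrite dot_vsub_l, !dot_vsub_r, (dot_comm n p x), Exp, (proj1 Sx). ring. }
  destruct (Req_dec (dot n p p) 0) as [Zp|NZp].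
  - assert (vnorm n d = 1) by (unfold vnorm; rewrite Edd, Zp, Rminus_0_r; apply sqrt_1).
    unfold sdist at 1. rewrite Exz, H, acos_opp, acos_1.
    pose proof (dps_le n x K P HKP). pose proof (sdist_le_half n x P Sx SP ltac:(rewrite dot_comm; auto)). lra.
  - set (k := nz n p). assert (Kk : K k) by (destruct Hpc as [_ [?|?]]; tauto).
    pose proof (dps_le n x K k Kk).
    set (a := vnorm n p). assert (Ha : 0 < a) by (apply vnorm_pos; auto).
    assert (Exk : dot n x k = a).
    { unfold k, nz. rewrite dot_vscale_r, Exp. fold a. rewrite <- vnorm_sq. fold a. unfold Rsqr. field. lra. }
    pose proof (sphere_dot_bound n x k Sx (HKs k Kk)). rewrite Exk in H0.
    assert (Hd : vnorm n d = sqrt (1 - Rsqr a)) by (unfold vnorm; rewrite Edd; unfold a; rewrite vnorm_sq; auto).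
    unfold sdist at 1. rewrite Exz, Hd, acos_opp.
    assert (Hs : sqrt (1 - Rsqr a) = sin (acos a)) by (rewrite sin_acos; auto; lra).
    assert (Hac : acos a <= PI/2) by (rewrite <- acos_0; apply acos_mono; lra).
    pose proof (acos_bound a).
    assert (Hsr : -1 <= sin (acos a) <= 1) by (split; apply SIN_bound).
    rewrite Hs, acos_asin by auto. rewrite asin_sin by lra.
    unfold sdist in H. rewrite Exk in H. lra.
Qed.

Lemma hex_polar_le n P A B : sphere n P -> good n P A -> good n P B ->
  hexcess n A B <= hexcess n (polar n B) (polar n A).
Proof.
  intros SP HA HB. pose proof (good_polar n P A HA) as HA'. pose proof (good_polar n P B HB) as HB'.
  assert (nA : nonempty A) by (exists P; apply HA). assert (nB' : nonempty (polar n B)) by (exists P; apply HB').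
  assert (nA' : nonempty (polar n A)) by (exists P; apply HA').
  apply hex_le; auto. intros x Hx.
  assert (Sx : sphere n x) by (apply HA; auto).
  destruct (F2 n P B x SP HB Sx (proj1 (proj2 (proj2 (proj2 HA))) x Hx)) as [Z|[z [Hz Hd]]].
  - rewrite Z. apply hex_ge0; auto.
  - eapply Rle_trans; [exact Hd|]. eapply Rle_trans; [| apply (hex_ge n _ _ z nA' Hz)].
    rewrite sdist_comm. apply F1; auto. apply HA'. apply Hz.
    rewrite (polar_polar_eq n P A HA); auto.
Qed.

Lemma hex_polar_eq n P A B : sphere n P -> good n P A -> good n P B ->
  hexcess n A B = hexcess n (polar n B) (polar n A).
Proof.
  intros SP HA HB. apply Rle_antisym. apply hex_polar_le with P; auto.
  pose proof (hex_polar_le n P (polar n B) (polar n A) SP (good_polar _ _ _ HB) (good_polar _ _ _ HA)).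
  rewrite (polar_polar_eq n P A HA), (polar_polar_eq n P B HB) in H. auto.
Qed.

Lemma hdist_polar n P A B : sphere n P -> good n P A -> good n P B ->
  hdist n (polar n A) (polar n B) = hdist n A B.
Proof.
  intros SP HA HB. unfold hdist.
  rewrite (hex_polar_eq n P A B SP HA HB), (hex_polar_eq n P B A SP HB HA). apply Rmax_comm.
Qed.


Lemma inv_S_pos k : 0 < / INR (S k).
Proof. apply Rinv_0_lt_compat, lt_0_INR; lia. Qed.

Lemma sub1d (a : nat -> R) : (forall k, -1 <= a k <= 1) ->
  exists psi l, (forall k, (psi k < psi (S k))%nat) /\ Un_cv (fun k => a (psi k)) l.
Proof.
  intros Hb. destruct (Bolzano_Weierstrass a (fun c => -1 <= c <= 1) (compact_P3 (-1) 1) Hb) as [l Hl].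
  assert (Hc : forall k N, exists p, (N <= p)%nat /\ Rabs (a p - l) < / INR (S k)).
  { intros k N. destruct (Hl (disc l (mkposreal _ (inv_S_pos k))) N) as [p [Hp1 Hp2]].
    exists (mkposreal _ (inv_S_pos k)). intros y Hy; exact Hy.
    exists p; split; auto. }
  set (g := fun k N => proj1_sig (constructive_indefinite_description _ (Hc k N))).
  assert (Hg : forall k N, (N <= g k N)%nat /\ Rabs (a (g k N) - l) < / INR (S k)).
  { intros k N. unfold g. destruct constructive_indefinite_description; auto. }
  set (psi := fix f k := match k with O => g O O | S k' => g (S k') (S (f k')) end).
  exists psi, l. split.
  - intros k. simpl. pose proof (proj1 (Hg (S k) (S (psi k)))). lia.
  - intros eps He. destruct (archimed_cor1 eps He) as [N [HN HN']]. exists N. intros k Hk.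
    unfold Rdist.
    assert (Rabs (a (psi k) - l) < / INR (S k)) by (destruct k; simpl; apply Hg).
    assert (/ INR (S k) <= / INR N) by (apply Rinv_le_contravar; [apply lt_0_INR; lia| apply le_INR; lia]).
    lra.
Qed.

Lemma incr_ge (psi : nat -> nat) : (forall k, (psi k < psi (S k))%nat) -> forall k, (k <= psi k)%nat.
Proof. intros H k; induction k. lia. specialize (H k); lia. Qed.

Lemma incr_mono (psi : nat -> nat) : (forall k, (psi k < psi (S k))%nat) -> forall k j, (k <= j)%nat -> (psi k <= psi j)%nat.
Proof. intros H k j Hkj; induction Hkj. lia. specialize (H m); lia. Qed.

Lemma cv_sub (a : nat -> R) L psi : (forall k, (psi k < psi (S k))%nat) -> Un_cv a L -> Un_cv (fun k => a (psi k)) L.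
Proof.
  intros Hp H eps He. destruct (H eps He) as [N HN]. exists N. intros k Hk.
  apply HN. pose proof (incr_ge psi Hp k). lia.
Qed.

Lemma seq_compact n (u : nat -> pt) : (forall k i, -1 <= u k i <= 1) ->
  exists phi l, (forall k, (phi k < phi (S k))%nat) /\
    forall i, (i <= n)%nat -> Un_cv (fun k => u (phi k) i) (l i).
Proof.
  intros Hb. induction n.
  - destruct (sub1d (fun k => u k 0%nat)) as [psi [l [H1 H2]]]. intros; apply Hb.
    exists psi, (fun _ => l). split; auto. intros i Hi. replace i with 0%nat by lia. auto.
  - destruct IHn as [phi [l [H1 H2]]].
    destruct (sub1d (fun k => u (phi k) (S n))) as [psi [l' [H3 H4]]]. intros; apply Hb.
    exists (fun k => phi (psi k)), (fun i => if Nat.eqb i (S n) then l' else l i). split.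
    + intros k. pose proof (H3 k). pose proof (incr_mono phi H1 (S (psi k)) (psi (S k)) H).
      specialize (H1 (psi k)). lia.
    + intros i Hi. destruct (Nat.eqb_spec i (S n)).
      * subst. auto.
      * apply (cv_sub (fun k => u (phi k) i)); auto. apply H2; lia.
Qed.

Lemma sphere_coord_bound n x i : sphere n x -> -1 <= x i <= 1.
Proof.
  intros [H Ht]. destruct (Compare_dec.le_lt_dec i n) as [Hi|Hi].
  - pose proof (term_le_sum (fun j => x j * x j) n i (fun j => Rle_0_sqr _) Hi).
    unfold dot in H. rewrite H in H0. nra.
  - rewrite Ht; auto; lra.
Qed.

Lemma compact_pos n P W : sphere n P -> sclosed n W -> (forall w, W w -> 0 < dot n P w) ->
  exists m, 0 < m /\ forall w, W w -> m <= dot n P w.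
Proof.
  intros SP HW Hpos. apply NNPP. intro Hn.
  assert (Hs : forall k : nat, exists w, W w /\ dot n P w < / INR (S k)).
  { intros k. apply NNPP. intro H. apply Hn. exists (/ INR (S k)). split. apply inv_S_pos.
    intros w Hw. destruct (Rle_lt_dec (/ INR (S k)) (dot n P w)); auto. exfalso; apply H; eauto. }
  set (u := fun k => proj1_sig (constructive_indefinite_description _ (Hs k))).
  assert (Hu : forall k, W (u k) /\ dot n P (u k) < / INR (S k)).
  { intros k. unfold u. destruct constructive_indefinite_description; auto. }
  assert (Su : forall k, sphere n (u k)) by (intros k; apply (proj1 HW); apply Hu).
  destruct (seq_compact n u) as [phi [l0 [Hphi Hl]]]. intros k i; apply (sphere_coord_bound n); auto.
  set (l := fun i => if Compare_dec.le_lt_dec i n then l0 i else 0).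
  assert (Hl' : forall i, (i <= n)%nat -> Un_cv (fun k => u (phi k) i) (l i)).
  { intros i Hi. unfold l. destruct Compare_dec.le_lt_dec; auto. lia. }
  assert (Tl : tz n l) by (intros i Hi; unfold l; destruct Compare_dec.le_lt_dec; auto; lia).
  assert (C1 : Un_cv (fun k => dot n (u (phi k)) (u (phi k))) (dot n l l)) by (apply cv_dot; auto).
  assert (Ell : dot n l l = 1).
  { apply UL_sequence with (fun k => dot n (u (phi k)) (u (phi k))); auto.
    eapply Un_cv_ext; [| apply (cv_const 1)]. intros k; simpl. symmetry; apply Su. }
  assert (Sl : sphere n l) by (split; auto).
  assert (Wl : W l).
  { apply (proj2 HW); auto. intros eps He. destruct (cos_thr eps He) as [c [Hc1 Hc2]].
    assert (C2 : Un_cv (fun k => dot n l (u (phi k))) 1) by (rewrite <- Ell; apply cv_dot; auto using cv_const).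
    destruct (cv_eventually_gt _ _ c C2) as [N HN]. lra.
    exists (u (phi N)). split. apply Hu.
    apply Rlt_le_trans with (acos c); auto. apply sdist_lt_acos; auto; try lra. }
  assert (C3 : Un_cv (fun k => dot n P (u (phi k))) (dot n P l)) by (apply cv_dot; auto using cv_const).
  assert (dot n P l <= 0).
  { apply (cv_le_inv _ _ _ C3). intros k. pose proof (proj2 (Hu (phi k))).
    assert (/ INR (S (phi k)) <= / INR (S k)) by (apply Rinv_le_contravar; [apply lt_0_INR; lia| apply le_INR; pose proof (incr_ge phi Hphi k); lia]).
    lra. }
  pose proof (Hpos l Wl). lra.
Qed.


Lemma close_lemma2 n eps : 0 < eps -> exists r, 0 < r /\
  forall u w, sphere n u -> sphere n w -> sqrt (ed n u w) < r -> sdist n u w < eps.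
Proof.
  intros He. destruct (cos_thr eps He) as [c [Hc1 Hc2]].
  exists (sqrt (2 - 2 * c)). split. apply sqrt_lt_R0; lra.
  intros u w Su Sw H. apply sqrt_lt_0_alt in H. rewrite ed_sphere in H by auto.
  apply Rlt_le_trans with (acos c); auto. apply sdist_lt_acos; auto; lra.
Qed.

Lemma vnorm_vsub n x y : vnorm n (vsub x y) = sqrt (ed n x y).
Proof. reflexivity. Qed.

Lemma vnorm_rev n v u : vnorm n v <= vnorm n (vsub v u) + vnorm n u.
Proof.
  pose proof (vnorm_add n (vsub v u) u).
  replace (vcomb 1 (vsub v u) 1 u) with v in H. auto.
  apply functional_extensionality; intro; unfold vcomb, vsub; ring.
Qed.

Lemma nz_close n v u : dot n v v <> 0 -> dot n u u <> 0 ->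
  vnorm n (vsub (nz n v) (nz n u)) <= 2 * vnorm n (vsub v u) / vnorm n v.
Proof.
  intros Hv Hu. set (A := vnorm n v). set (B := vnorm n u).
  assert (HA : 0 < A) by (apply vnorm_pos; auto). assert (HB : 0 < B) by (apply vnorm_pos; auto).
  assert (E : vsub (nz n v) (nz n u) = vcomb 1 (vscale (/ A) (vsub v u)) 1 (vscale (/ A - / B) u)).
  { apply functional_extensionality; intro; unfold nz, vsub, vcomb, vscale. fold A B. ring. }
  rewrite E. eapply Rle_trans. apply vnorm_add. rewrite !vnorm_scale.
  rewrite Rabs_pos_eq by (left; apply Rinv_0_lt_compat; auto). fold B.
  assert (Hr1 : A <= vnorm n (vsub v u) + B) by apply vnorm_rev.
  assert (Hr2 : B <= vnorm n (vsub v u) + A).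
  { pose proof (vnorm_rev n u v). replace (vnorm n (vsub u v)) with (vnorm n (vsub v u)) in H; auto.
    rewrite !vnorm_vsub, ed_comm; auto. }
  assert (Habs : Rabs (/ A - / B) * B = Rabs (B - A) / A).
  { replace (/ A - / B) with ((B - A) / (A * B)) by (field; lra). unfold Rdiv.
    rewrite Rabs_mult, (Rabs_pos_eq (/ (A * B))) by (left; apply Rinv_0_lt_compat; nra). field; lra. }
  rewrite Habs. assert (Rabs (B - A) <= vnorm n (vsub v u)) by (apply Rabs_le; lra).
  unfold Rdiv. apply Rmult_le_reg_r with A; auto.
  replace ((/ A * vnorm n (vsub v u) + Rabs (B - A) * / A) * A) with (vnorm n (vsub v u) + Rabs (B - A)) by (field; lra).
  replace (2 * vnorm n (vsub v u) * / A * A) with (2 * vnorm n (vsub v u)) by (field; lra). lra.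
Qed.

Lemma wulff_pos n P W : HWulff n P W -> forall x, W x -> 0 < dot n P x.
Proof.
  intros (HS & Hh & _) x Hx. specialize (Hh x Hx).
  assert (Sx : sphere n x) by (apply (proj1 (proj2 HS)); auto).
  destruct (Rle_lt_dec (dot n P x) 0); auto. exfalso. apply Hh. split; auto.
  rewrite dot_vopp_l. lra.
Qed.

Lemma sconvex_cconv n W : (forall x, W x -> sphere n x) -> sconvex n W -> cconv n W.
Proof.
  intros HWs [_ Harc] k1 k2 a b H1 H2 Ha Hb Hv.
  assert (Hab : 0 < a + b).
  { destruct (Rle_lt_dec (a + b) 0); auto. exfalso. assert (a = 0) by lra. assert (b = 0) by lra. subst.
    apply Hv. rewrite dot_vcomb_l, !dot_vcomb_r. ring. }
  set (t := b / (a + b)).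
  assert (Ht : 0 <= t <= 1) by (unfold t; split; [unfold Rdiv; apply Rmult_le_pos; [lra| left; apply Rinv_0_lt_compat; lra]| apply Rmult_le_reg_r with (a+b); [lra|]; unfold Rdiv; rewrite Rmult_assoc, Rinv_l; lra]).
  pose proof (Harc k1 k2 H1 H2 t Ht). rewrite arc_pt_nz in H.
  assert (E : vcomb (1 - t) k1 t k2 = vscale (/ (a + b)) (vcomb a k1 b k2)).
  { apply functional_extensionality; intro; unfold vcomb, vscale, t. field. lra. }
  rewrite E, nz_scale in H; auto. apply Rinv_0_lt_compat; auto.
Qed.


Lemma wulff_good n P W : HWulff n P W -> good n P W.
Proof.
  intros HW. pose proof (wulff_pos n P W HW) as Hpos.
  destruct HW as (HS & Hh & Hint & Hbody).
  assert (HWs : forall x, W x -> sphere n x) by apply (proj1 (proj2 HS)).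
  split; [|split; [|split; [|split]]]; auto.
  - apply HS.
  - apply Hint.
  - intros x Hx; left; auto.
  - apply sconvex_cconv; auto. apply Hbody.
Qed.

Lemma sphere_vopp n P : sphere n P -> sphere n (vopp P).
Proof. intros [H1 H2]. split. rewrite dot_vopp_l, dot_vopp_r; lra. apply tz_vopp; auto. Qed.

Lemma wulff_polar n P W : sphere n P -> HWulff n P W -> HWulff n P (polar n W).
Proof.
  intros SP HW. pose proof (wulff_good n P W HW) as GW. pose proof (good_polar n P W GW) as GW'.
  pose proof (wulff_pos n P W HW) as Hpos.
  destruct GW' as (Ps & Pc & PP & Ph & Pv).
  destruct HW as (HS & Hh & [HWP [eps [He Hint]]] & Hbody).
  assert (Pos : forall Q, polar n W Q -> 0 < dot n P Q).
  { intros Q [SQ HQ]. pose proof (HQ P HWP) as H0.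
    destruct H0 as [H0|H0]; auto. exfalso.
    set (s := Rmin (eps / 2) 1).
    assert (Hs0 : 0 < s) by (unfold s; apply Rmin_glb_lt; lra).
    assert (Hs1 : s <= 1) by apply Rmin_r. assert (Hs2 : s <= eps / 2) by apply Rmin_l.
    pose proof PI2_1. pose proof PI2_RGT_0.
    set (w := vcomb (cos s) P (- sin s) Q).
    assert (Sw : sphere n w).
    { split. unfold w. rewrite dot_vcomb_l, !dot_vcomb_r, (dot_comm n Q P), <- H0, (proj1 SP), (proj1 SQ).
      pose proof (sin2_cos2 s). unfold Rsqr in H2. lra.
      apply tz_vcomb; [exact (proj2 SP)| exact (proj2 SQ)]. }
    assert (Ww : W w).
    { apply Hint; auto. unfold sdist, w. rewrite dot_vcomb_r, <- H0, (proj1 SP).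
      replace (cos s * 1 + - sin s * 0) with (cos s) by ring. rewrite acos_cos; lra. }
    pose proof (HQ w Ww). unfold w in H2. rewrite dot_vcomb_l, <- H0, (proj1 SQ) in H2.
    pose proof (sin_gt_0 s Hs0 ltac:(lra)). lra. }
  assert (Hh' : forall Q, polar n W Q -> ~ hemi n (vopp P) Q).
  { intros Q HQ [_ HQ']. rewrite dot_vopp_l in HQ'. pose proof (Pos Q HQ). lra. }
  destruct (compact_pos n P W SP (proj2 HS) Hpos) as [m [Hm HmW]].
  destruct (close_lemma n m Hm) as [eps' [He' Hcl]].
  assert (Hint' : interior_pt n (polar n W) P).
  { split; auto. exists eps'. split; auto. intros Q SQ HPQ. split; auto. intros w Hw.
    pose proof (Hcl P Q SP SQ HPQ). pose proof (HmW w Hw).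
    pose proof (dot_diff_bound n P Q w). unfold vnorm in H1. rewrite (proj1 (proj1 GW w Hw)), sqrt_1 in H1.
    apply Rabs_le_inv' in H1. rewrite dot_comm. lra. }
  split; [|split; [|split]]; auto.
  - split; [exists P; auto| auto].
  - split; [|split; [auto| exists P; auto]].
    split. exists (vopp P). split; auto using sphere_vopp.
    intros Q1 Q2 H1 H2 t Ht. rewrite arc_pt_nz. apply Pv; auto; try lra.
    intro Z. apply (dot_self_eq0_r n _ P) in Z. rewrite dot_comm, dot_vcomb_r in Z.
    pose proof (Pos Q1 H1). pose proof (Pos Q2 H2).
    destruct (Rle_lt_dec t 0). assert (t = 0) by lra. subst. lra. nra.
Qed.


Lemma hex_le_hdist n A B : hexcess n A B <= hdist n A B.
Proof. apply Rmax_l. Qed.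
Lemma hex_le_hdist' n A B : hexcess n B A <= hdist n A B.
Proof. apply Rmax_r. Qed.

Lemma near n A B x d : nonempty B -> A x -> hexcess n A B < d -> exists y, B y /\ sdist n x y < d.
Proof.
  intros HB Hx Hd. pose proof (hex_ge n A B x HB Hx).
  destruct (dps_approx n x B (d - dist_pt_set n x B) HB) as [y [Hy Hy']]. lra.
  exists y; split; auto; lra.
Qed.

Lemma cl_good n P W : sphere n P -> HWulff_cl n P W -> good n P W.
Proof.
  intros SP [[HWne HWc] Happ].
  assert (HWs : forall x, W x -> sphere n x) by apply HWc.
  assert (WP : W P).
  { apply (proj2 HWc); auto. intros eps He. destruct (Happ eps He) as [V [HV Hd]].
    pose proof (wulff_good n P V HV) as GV.
    apply (near n V W P eps); auto. apply GV. pose proof (hex_le_hdist' n W V); lra. }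
  assert (Wh : forall x, W x -> 0 <= dot n P x).
  { intros x Hx. destruct (Rle_lt_dec 0 (dot n P x)) as [|Hneg]; auto. exfalso.
    destruct (close_lemma n (- dot n P x)) as [d [Hd Hcl]]. lra.
    destruct (Happ d Hd) as [V [HV Hdist]].
    pose proof (wulff_good n P V HV) as GV.
    destruct (near n W V x d) as [y [Hy Hxy]]; auto. exists P; apply GV.
    pose proof (hex_le_hdist n W V); lra.
    pose proof (Hcl x y (HWs x Hx) (proj1 GV y Hy) Hxy).
    pose proof (wulff_pos n P V HV y Hy).
    pose proof (dot_diff_bound n x y P). unfold vnorm in H1. rewrite (proj1 SP), sqrt_1 in H1.
    rewrite (dot_comm n x P), (dot_comm n y P) in H1. apply Rabs_le_inv' in H1. lra. }
  split; [|split; [|split; [|split]]]; auto.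
  intros k1 k2 a b H1 H2 Ha Hb Hv.
  set (v := vcomb a k1 b k2). fold v in Hv.
  assert (Tv : tz n v) by (apply tz_vcomb; [exact (proj2 (HWs k1 H1))| exact (proj2 (HWs k2 H2))]).
  apply (proj2 HWc). apply nz_sphere; auto.
  intros eps He.
  destruct (close_lemma2 n (eps / 2)) as [r [Hr Hcl2]]. lra.
  set (A := vnorm n v). assert (HA : 0 < A) by (apply vnorm_pos; auto).
  assert (Hab : 0 < a + b).
  { destruct (Rle_lt_dec (a + b) 0); auto. exfalso. assert (a = 0) by lra. assert (b = 0) by lra. subst.
    apply Hv. unfold v. rewrite dot_vcomb_l, !dot_vcomb_r. ring. }
  set (eta := r * A / (2 * (a + b))).
  assert (Heta : 0 < eta) by (unfold eta; apply Rdiv_lt_0_compat; nra).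
  destruct (close_lemma n eta Heta) as [d0 [Hd0 Hcl]].
  set (d := Rmin d0 (eps / 2)).
  assert (Hd : 0 < d) by (unfold d; apply Rmin_glb_lt; lra).
  assert (Hdd0 : d <= d0) by apply Rmin_l. assert (Hde : d <= eps / 2) by apply Rmin_r.
  destruct (Happ d Hd) as [V [HV Hdist]].
  pose proof (wulff_good n P V HV) as GV.
  assert (nV : nonempty V) by (exists P; apply GV).
  assert (nW : nonempty W) by (exists P; auto).
  destruct (near n W V k1 d nV H1) as [y1 [Hy1 Hky1]]. pose proof (hex_le_hdist n W V); lra.
  destruct (near n W V k2 d nV H2) as [y2 [Hy2 Hky2]]. pose proof (hex_le_hdist n W V); lra.
  set (u := vcomb a y1 b y2).
  assert (Pu : 0 < dot n P u).
  { unfold u. rewrite dot_vcomb_r. pose proof (wulff_pos n P V HV y1 Hy1). pose proof (wulff_pos n P V HV y2 Hy2). destruct (Rle_lt_dec a 0). assert (a = 0) by lra. subst. nra. pose proof (Rmult_lt_0_compat _ _ r0 H). pose proof (Rmult_le_pos b (dot n P y2) Hb ltac:(lra)). lra. }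
  assert (Hu : dot n u u <> 0).
  { intro Z. apply (dot_self_eq0_r n u P) in Z. rewrite dot_comm in Z. lra. }
  assert (Vu : V (nz n u)).
  { destruct GV as (_ & _ & _ & _ & GVc). apply GVc; auto. }
  destruct (near n V W (nz n u) d nW Vu) as [w [Hw Huw]]. pose proof (hex_le_hdist' n W V); lra.
  pose proof (Hcl k1 y1 (HWs k1 H1) (proj1 GV y1 Hy1) ltac:(lra)) as E1.
  pose proof (Hcl k2 y2 (HWs k2 H2) (proj1 GV y2 Hy2) ltac:(lra)) as E2.
  assert (Hvu : vnorm n (vsub v u) <= a * sqrt (ed n k1 y1) + b * sqrt (ed n k2 y2)).
  { replace (vsub v u) with (vcomb 1 (vscale a (vsub k1 y1)) 1 (vscale b (vsub k2 y2))).
    eapply Rle_trans. apply vnorm_add. rewrite !vnorm_scale, !Rabs_pos_eq by lra. rewrite !vnorm_vsub. lra.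
    apply functional_extensionality; intro; unfold v, u, vcomb, vsub, vscale; ring. }
  assert (Hlt : a * sqrt (ed n k1 y1) + b * sqrt (ed n k2 y2) < (a + b) * eta).
  { pose proof (sqrt_pos (ed n k1 y1)). pose proof (sqrt_pos (ed n k2 y2)).
    destruct (Rle_lt_dec a 0). assert (a = 0) by lra. subst. nra. nra. }
  pose proof (nz_close n v u Hv Hu) as Hnz. fold A in Hnz.
  assert (Hnzr : vnorm n (vsub (nz n v) (nz n u)) < r).
  { eapply Rle_lt_trans; [exact Hnz|]. unfold Rdiv. apply Rmult_lt_reg_r with A; auto.
    rewrite Rmult_assoc, Rinv_l, Rmult_1_r by lra.
    assert (2 * ((a + b) * eta) = r * A) by (unfold eta; field; lra). nra. }
  rewrite vnorm_vsub in Hnzr.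
  assert (Su : sphere n (nz n u)) by (apply nz_sphere; auto; apply tz_vcomb; [exact (proj2 (proj1 GV y1 Hy1))| exact (proj2 (proj1 GV y2 Hy2))]).
  assert (Sv : sphere n (nz n v)) by (apply nz_sphere; auto).
  pose proof (Hcl2 _ _ Sv Su Hnzr).
  exists w. split; auto.
  pose proof (sdist_tri n (nz n v) (nz n u) w Sv Su (HWs w Hw)). lra.
Qed.

Lemma cl_polar n P W : sphere n P -> HWulff_cl n P W -> HWulff_cl n P (polar n W).
Proof.
  intros SP HW. pose proof (cl_good n P W SP HW) as GW. pose proof (good_polar n P W GW) as GW'.
  split. split. exists P; apply GW'. apply GW'.
  intros eps He. destruct HW as [_ Happ]. destruct (Happ eps He) as [V [HV Hd]].
  exists (polar n V). split. apply wulff_polar; auto.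
  rewrite (hdist_polar n P W V SP GW (wulff_good n P V HV)). auto.
Qed.

Theorem theorem1 (n : nat) (P : pt) (hn : (0 < n)%nat) (hP : sphere n P) :
  (* (1) *)
  ((forall W, HWulff n P W -> HWulff n P (polar n W)) /\
   (forall W1 W2, HWulff n P W1 -> HWulff n P W2 ->
      set_eq (polar n W1) (polar n W2) -> set_eq W1 W2) /\
   (forall V, HWulff n P V -> exists W, HWulff n P W /\ set_eq (polar n W) V) /\
   (forall W1 W2, HWulff n P W1 -> HWulff n P W2 ->
      hdist n (polar n W1) (polar n W2) = hdist n W1 W2)) /\
  (* (2) *)
  ((forall W, HWulff_cl n P W -> HWulff_cl n P (polar n W)) /\
   (forall W1 W2, HWulff_cl n P W1 -> HWulff_cl n P W2 ->
      set_eq (polar n W1) (polar n W2) -> set_eq W1 W2) /\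
   (forall V, HWulff_cl n P V -> exists W, HWulff_cl n P W /\ set_eq (polar n W) V) /\
   (forall W1 W2, HWulff_cl n P W1 -> HWulff_cl n P W2 ->
      hdist n (polar n W1) (polar n W2) = hdist n W1 W2)).
Proof.
  split; split; [| split; [| split]| | split; [| split]].
  - intros W HW. apply wulff_polar; auto.
  - intros W1 W2 H1 H2 E. apply set_eq_eq in E.
    rewrite <- (polar_polar_eq n P W1 (wulff_good n P W1 H1)), <- (polar_polar_eq n P W2 (wulff_good n P W2 H2)), E.
    intros x; tauto.
  - intros V HV. exists (polar n V). split. apply wulff_polar; auto.
    rewrite (polar_polar_eq n P V (wulff_good n P V HV)). intros x; tauto.
  - intros W1 W2 H1 H2. apply hdist_polar with P; auto using wulff_good.
  - intros W HW. apply cl_polar; auto.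
  - intros W1 W2 H1 H2 E. apply set_eq_eq in E.
    rewrite <- (polar_polar_eq n P W1 (cl_good n P W1 hP H1)), <- (polar_polar_eq n P W2 (cl_good n P W2 hP H2)), E.
    intros x; tauto.
  - intros V HV. exists (polar n V). split. apply cl_polar; auto.
    rewrite (polar_polar_eq n P V (cl_good n P V hP HV)). intros x; tauto.
  - intros W1 W2 H1 H2. apply hdist_polar with P; auto using cl_good.
Qed.
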